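(* The labelled rule $\Box_S$, with premise $\Gamma, A \leq \mathbf{m} \vdash \mathbf{j} \leq \Box \mathbf{m}, \Delta$ and conclusion $\Gamma \vdash \mathbf{j} \leq \Box A, \Delta$ (where $\mathbf{m}$ does not occur in the conclusion), is sound and invertible on the canonical extension $\mathbb{A}^\delta$ of any $\mathcal{L}$-algebra $\mathbb{A}$; i.e. validity of the premise is equivalent to validity of the conclusion, via the chain: uncurrying (using the side condition), the adjunction $\Diamond^{b}\mathbf{j}\leq\mathbf{m}$ iff $\mathbf{j}\leq\Box\mathbf{m}$, complete meet-generation giving $\Diamond^{b}\mathbf{j}\leq A$, and adjunction again giving $\mathbf{j}\leq\Box A$.
   Context: An $\mathcal{L}$-algebra is a bounded lattice with a finitely join-preserving $\Diamond$ and finitely meet-preserving $\Box$; its canonical extension $\mathbb{A}^\delta=(L^\delta,\Box^\pi,\Diamond^\sigma)$ is complete, with $\Box^\pi$ completely meet-preserving and hence having a left adjoint denoted $\Diamond^{b}$ ($\Diamond^{b}u\leq v$ iff $u\leq\Box v$). Nominals range over a completely join-generating subset and conominals over a completely meet-generating subset of $\mathbb{A}^\delta$. A sequent $\Gamma\vdash\Delta$ of inequalities (labelled formulas $\mathbf{j}\leq A$, $A\leq\mathbf{m}$ and pure structures $\mathbf{j}\leq\mathbf{T}$, $\mathbf{T}\leq\mathbf{m}$) is interpreted as $\forall\overline{p}\forall\overline{\mathbf{j}}\forall\overline{\mathbf{m}}(\bigwedge\Gamma\Rightarrow\bigvee\Delta)$. *)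

(* Defs.v *)
From mathcomp Require Import all_boot all_order.
Set Implicit Arguments. Unset Strict Implicit. Unset Printing Implicit Defensive.
Import Order.Theory.
Local Open Scope order_scope.

Definition is_Lalgebra d (L : tbLatticeType d) (box dia : L -> L) : Prop :=
  [/\ box \top = \top, (forall a b, box (a `&` b) = box a `&` box b),
      dia \bot = \bot & (forall a b, dia (a `|` b) = dia a `|` dia b)].

Section LubGlb.
Context {d : Order.disp_t} {C : porderType d}.
Definition is_lub (S : C -> Prop) (x : C) : Prop :=
  (forall y, S y -> y <= x) /\ (forall z, (forall y, S y -> y <= z) -> x <= z).
Definition is_glb (S : C -> Prop) (x : C) : Prop :=
  (forall y, S y -> x <= y) /\ (forall z, (forall y, S y -> z <= y) -> z <= x).
Definition complete_lattice : Prop :=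
  forall S : C -> Prop, exists x, is_lub S x.
Definition completely_join_generating (J : C -> Prop) : Prop :=
  forall u : C, is_lub (fun j => J j /\ j <= u) u.
Definition completely_meet_generating (M : C -> Prop) : Prop :=
  forall u : C, is_glb (fun m => M m /\ u <= m) u.
End LubGlb.

Section CanExt.
Context {d : Order.disp_t} {L : tbLatticeType d}
        {dC : Order.disp_t} {C : tbLatticeType dC} (e : L -> C).

Definition is_closed (k : C) : Prop :=
  exists F : L -> Prop, is_glb (fun x => exists a, F a /\ x = e a) k.
Definition is_open (o : C) : Prop :=
  exists I : L -> Prop, is_lub (fun x => exists a, I a /\ x = e a) o.

Definition canonical_extension : Prop :=
  [/\ complete_lattice (C := C),
      [/\ (forall a b, (e a <= e b) = (a <= b)),
          (forall a b, e (a `&` b) = e a `&` e b),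
          (forall a b, e (a `|` b) = e a `|` e b),
          e \top = \top & e \bot = \bot],
      (forall u, is_lub (fun k => is_closed k /\ k <= u) u /\
                 is_glb (fun o => is_open o /\ u <= o) u) &
      (forall (S T : L -> Prop) (k o : C),
          is_glb (fun x => exists a, S a /\ x = e a) k ->
          is_lub (fun x => exists a, T a /\ x = e a) o ->
          k <= o ->
          exists (s t : seq L), (forall a, a \in s -> S a) /\
                                (forall a, a \in t -> T a) /\
                                \meet_(a <- s) a <= \join_(b <- t) b)].

(* g = f^pi : for open o, f^pi(o) = \/{ e(f a) | e a <= o };
   for arbitrary u, f^pi(u) = /\{ f^pi(o) | o open, u <= o }. *)
Definition pi_extension (f : L -> L) (g : C -> C) : Prop :=
  forall u, is_glb (fun x => exists o, [/\ is_open o, u <= o &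
                     is_lub (fun y => exists a, e a <= o /\ y = e (f a)) x]) (g u).

(* g = f^sigma : for closed k, f^sigma(k) = /\{ e(f a) | k <= e a };
   for arbitrary u, f^sigma(u) = \/{ f^sigma(k) | k closed, k <= u }. *)
Definition sigma_extension (f : L -> L) (g : C -> C) : Prop :=
  forall u, is_lub (fun x => exists k, [/\ is_closed k, k <= u &
                     is_glb (fun y => exists a, k <= e a /\ y = e (f a)) x]) (g u).
End CanExt.

Inductive fml : Type :=
  | FVar of nat | FTop | FBot
  | FAnd of fml & fml | FOr of fml & fml
  | FBox of fml | FDia of fml.

Inductive pstr : Type :=
  | PNom of nat
  | PCnom of nat
  | PBox of pstr
  | PDia of pstr
  | PBDia of pstr.       (* black diamond: left adjoint of box *)

Inductive ineq : Type :=
  | NomLeF of nat & fml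
  | FLeCnom of fml & nat
  | NomLeP of nat & pstr
  | PLeCnom of pstr & nat.

(* list membership (Prop-valued, no decidable equality needed) *)
Fixpoint In_seq {T : Type} (x : T) (s : seq T) : Prop :=
  match s with [::] => False | y :: s' => y = x \/ In_seq x s' end.

Record sequent := Sequent { antecedent : seq ineq; succedent : seq ineq }.

Fixpoint cnom_in_pstr (m : nat) (T : pstr) : bool :=
  match T with
  | PNom _ => false
  | PCnom m' => m' == m
  | PBox T' | PDia T' | PBDia T' => cnom_in_pstr m T'
  end.

Definition cnom_in_ineq (m : nat) (i : ineq) : bool :=
  match i with
  | NomLeF _ _ => false
  | FLeCnom _ m' => m' == m
  | NomLeP _ T => cnom_in_pstr m T
  | PLeCnom T m' => cnom_in_pstr m T || (m' == m)
  end.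

Definition cnom_in_sequent (m : nat) (s : sequent) : bool :=
  has (cnom_in_ineq m) (antecedent s) || has (cnom_in_ineq m) (succedent s).

Section Semantics.
Context {dC : Order.disp_t} {C : tbLatticeType dC}
        (boxC diaC bdiaC : C -> C).

Fixpoint fml_val (V : nat -> C) (A : fml) : C :=
  match A with
  | FVar p => V p
  | FTop => \top
  | FBot => \bot
  | FAnd A B => fml_val V A `&` fml_val V B
  | FOr A B => fml_val V A `|` fml_val V B
  | FBox A => boxC (fml_val V A)
  | FDia A => diaC (fml_val V A)
  end.

Fixpoint pstr_val (nj nm : nat -> C) (T : pstr) : C :=
  match T with
  | PNom j => nj j
  | PCnom m => nm m
  | PBox T => boxC (pstr_val nj nm T)
  | PDia T => diaC (pstr_val nj nm T)
  | PBDia T => bdiaC (pstr_val nj nm T)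
  end.

Definition ineq_holds (V nj nm : nat -> C) (i : ineq) : Prop :=
  match i with
  | NomLeF j A => nj j <= fml_val V A
  | FLeCnom A m => fml_val V A <= nm m
  | NomLeP j T => nj j <= pstr_val nj nm T
  | PLeCnom T m => pstr_val nj nm T <= nm m
  end.

Definition seq_valid (J M : C -> Prop) (s : sequent) : Prop :=
  forall (V nj nm : nat -> C),
    (forall i, J (nj i)) -> (forall i, M (nm i)) ->
    (forall g, In_seq g (antecedent s) -> ineq_holds V nj nm g) ->
    exists2 dl, In_seq dl (succedent s) & ineq_holds V nj nm dl.
End Semantics.

(* Main.v *)
Require Import Defs.
From mathcomp Require Import all_boot all_order.
From Stdlib Require Import Classical.
Import Order.Theory.
Local Open Scope order_scope.
Set Implicit Arguments.

Lemma In_seq_hasN {T : Type} (p : pred T) (s : seq T) x :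
  ~~ has p s -> In_seq x s -> ~~ p x.
Proof.
elim: s => [|y s IH] //= /norP [Hy Hs] [<-|H]; first by [].
exact: IH.
Qed.

Lemma In_seq_cat1 {T : Type} (s : seq T) y x :
  In_seq x (s ++ [:: y]) -> In_seq x s \/ x = y.
Proof.
elim: s => [|z s IH] /=; first by case=> [->|[]]; right.
case=> [->|H]; first by left; left.
by case: (IH H) => [H'|H']; [left; right|right].
Qed.

Lemma In_seq_cat1l {T : Type} (s : seq T) y x :
  In_seq x s -> In_seq x (s ++ [:: y]).
Proof. elim: s => [|z s IH] //= [->|H]; [by left | by right; apply: IH]. Qed.

Section Inv.
Context {dC : Order.disp_t} {C : tbLatticeType dC} (boxC diaC bdiaC : C -> C).

Lemma pstr_inv nj nm nm' m T :
  (forall i, i != m -> nm' i = nm i) -> ~~ cnom_in_pstr m T ->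
  pstr_val boxC diaC bdiaC nj nm' T = pstr_val boxC diaC bdiaC nj nm T.
Proof.
move=> H; elim: T => [i|i|T IH|T IH|T IH] //= Hn; try by rewrite IH.
by rewrite H // eq_sym.
Qed.

Lemma ineq_inv V nj nm nm' m g :
  (forall i, i != m -> nm' i = nm i) -> ~~ cnom_in_ineq m g ->
  ineq_holds boxC diaC bdiaC V nj nm' g <-> ineq_holds boxC diaC bdiaC V nj nm g.
Proof.
move=> H; case: g => [i A|A i|i T|T i] /= Hn.
- by [].
- by rewrite H // eq_sym.
- by rewrite (@pstr_inv nj nm nm' m T H Hn).
- move: Hn; rewrite negb_or => /andP [H1 H2].
  by rewrite (@pstr_inv nj nm nm' m T H H1) H // eq_sym.
Qed.
End Inv.

Theorem mainTheorem4
  (d : Order.disp_t) (L : tbLatticeType d) (box dia : L -> L)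
  (HA : is_Lalgebra box dia)
  (dC : Order.disp_t) (C : tbLatticeType dC) (e : L -> C)
  (Hce : canonical_extension e)
  (boxpi diasig bdia : C -> C)
  (Hbox : pi_extension e box boxpi)
  (Hdia : sigma_extension e dia diasig)
  (Hbdia : forall u v : C, bdia u <= v <-> u <= boxpi v)
  (J M : C -> Prop)
  (HJ : completely_join_generating J) (HM : completely_meet_generating M)
  (Gamma Delta : seq ineq) (A : fml) (j m : nat)
  (Hm : ~~ cnom_in_sequent m (Sequent Gamma (NomLeF j (FBox A) :: Delta))) :
  seq_valid boxpi diasig bdia J M
    (Sequent (Gamma ++ [:: FLeCnom A m]) (NomLeP j (PBox (PCnom m)) :: Delta))
  <->
  seq_valid boxpi diasig bdia J M
    (Sequent Gamma (NomLeF j (FBox A) :: Delta)).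
Proof.
move: Hm; rewrite /cnom_in_sequent /= negb_or => /andP [HG HD].
have mono : forall a b, a <= b -> boxpi a <= boxpi b.
  move=> a b ab; apply/Hbdia; apply: le_trans ab; exact/Hbdia.
split.
- move=> Hp V nj nm HJn HMn HGam /=.
  case: (classic (exists2 dl, In_seq dl Delta &
                    ineq_holds boxpi diasig bdia V nj nm dl)).
    by case=> dl H1 H2; exists dl => //; right.
  move=> Hno; exists (NomLeF j (FBox A)); first by left.
  rewrite /=; apply/Hbdia.
  case: (HM (fml_val boxpi diasig V A)) => _; apply=> m' [Mm' Am'].
  pose nm' := fun i => if i == m then m' else nm i.
  have Hnm : forall i, i != m -> nm' i = nm i.
    by move=> i /negbTE Hi; rewrite /nm' Hi.
  have HM' : forall i, M (nm' i) by move=> i; rewrite /nm'; case: (i == m).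
  have HG' : forall g, In_seq g (Gamma ++ [:: FLeCnom A m]) ->
      ineq_holds boxpi diasig bdia V nj nm' g.
    move=> g Hg0; case: (@In_seq_cat1 _ _ _ _ Hg0) => [Hg|->].
      apply/(@ineq_inv _ _ _ _ _ _ _ _ _ _ _ Hnm); last exact: HGam.
      exact: (@In_seq_hasN _ _ _ _ HG Hg).
    by rewrite /= /nm' eqxx.
  case: (Hp V nj nm' HJn HM' HG') => dl /= [<-|Hdl] Hh.
    by move: Hh; rewrite /= /nm' eqxx => /Hbdia.
  exfalso; apply: Hno; exists dl => //.
  apply/(@ineq_inv _ _ _ _ _ _ _ _ _ _ _ Hnm) => //.
  have := @In_seq_hasN _ _ _ _ HD Hdl; by [].
- move=> Hc V nj nm HJn HMn HGam /=.
  have HA' : fml_val boxpi diasig V A <= nm m.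
    by apply: (HGam (FLeCnom A m)); elim: Gamma {HG HGam Hc} => [|z s IH] /=; [left|right].
  have [dl Hdl Hh] := Hc V nj nm HJn HMn
     (fun g Hg => HGam g (@In_seq_cat1l _ _ _ _ Hg)).
  case: Hdl Hh => [<-|Hdl] Hh.
    exists (NomLeP j (PBox (PCnom m))); first by left.
    by move: Hh => /= Hh; apply: le_trans Hh (mono _ _ HA').
  by exists dl => //; right.
Qed.
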